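(* Let $D\geq 2$ and $2\leq r\leq D^2$. Then the set of primitive completely positive maps on $\mathcal{M}_D(\mathbb{C})$ of Kraus rank $r$ is non-empty.
   Context: A CP map on $\mathcal{M}_D(\mathbb{C})$ has the form $\mathcal{T}(X)=\sum_iA_iXA_i^\dagger$; its Kraus rank is the minimal number of such $A_i$, equal to the rank of the Choi matrix $\omega(\mathcal{T})=(\mathcal{T}\otimes\mathrm{id})(|\varphi\rangle\langle\varphi|)$, $\varphi=\sum_i|ii\rangle$ (so it is at most $D^2$). $\mathcal{T}$ is primitive iff there exists $n\in\mathbb{N}$ with $\mathrm{rank}\,\omega(\mathcal{T}^n)=D^2$. *)

(* Defs.v *)
From HB Require Import structures.
From mathcomp Require Import all_boot all_order all_algebra.
From mathcomp.real_closed Require Import mxtens.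
Set Implicit Arguments. Unset Strict Implicit. Unset Printing Implicit Defensive.
Import Order.TTheory GRing.Theory Num.Theory.
Local Open Scope ring_scope.

(* The field C of scalars is an arbitrary numClosedFieldType (e.g. the complex
   numbers); Num.conj is complex conjugation. *)

Definition adjmx (C : numClosedFieldType) (D : nat) (A : 'M[C]_D) : 'M[C]_D :=
  map_mx Num.conj A^T.

Definition kraus_map (C : numClosedFieldType) (D k : nat) (A : 'I_k -> 'M[C]_D)
  (X : 'M[C]_D) : 'M[C]_D :=
  \sum_(i < k) (A i *m X *m adjmx (A i)).

(* Choi matrix  omega(T) = (T (x) id)(|phi><phi|) = \sum_{i,j} T(E_ij) (x) E_ij,
   with phi = \sum_i |ii>. *)
Definition choi (C : numClosedFieldType) (D : nat) (T : 'M[C]_D -> 'M[C]_D)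
  : 'M[C]_(D * D) :=
  \sum_(i < D) \sum_(j < D) (T (delta_mx i j) *t (delta_mx i j : 'M[C]_D)).

Definition kraus_rank (C : numClosedFieldType) (D : nat) (T : 'M[C]_D -> 'M[C]_D)
  : nat := \rank (choi T).

Definition primitive (C : numClosedFieldType) (D : nat) (T : 'M[C]_D -> 'M[C]_D)
  : Prop := exists n : nat, \rank (choi (iter n T)) = (D ^ 2)%N.

(* Main.v *)
Require Import Defs.
From HB Require Import structures.
From mathcomp Require Import all_boot all_order all_algebra.
From mathcomp.real_closed Require Import mxtens.
From mathcomp Require Import zify.
Set Implicit Arguments. Unset Strict Implicit. Unset Printing Implicit Defensive.
Import Order.TTheory GRing.Theory Num.Theory.
Local Open Scope ring_scope.

Section Gen.
Variable C : numClosedFieldType.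

Lemma rank_gram (k n : nat) (M : 'M[C]_(k, n)) :
  \rank (M^T *m map_mx Num.conj M) = \rank M.
Proof.
apply/eqP; rewrite eqn_leq; apply/andP; split.
  by apply: leq_trans (mxrankM_maxr _ _) _; rewrite (mxrank_map Num.Def.conjC).
have sub : (kermx (M^T *m map_mx Num.conj M) <= kermx M^T)%MS.
  apply/row_subP => i; apply/sub_kermxP.
  set u := row i _.
  have hu : u *m (M^T *m map_mx Num.conj M) = 0.
    by apply/sub_kermxP; apply: row_sub.
  set y := u *m M^T.
  have hy : y *m (map_mx Num.conj y)^T = 0.
    rewrite /y map_mxM trmx_mul map_trmx trmxK mulmxA -[y *m _]mulmxA.
    by rewrite /y -mulmxA mulmxA [u *m _]hu mul0mx.
  apply/matrixP => a b; rewrite [a]ord1 mxE.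
  have := congr1 (fun N : 'M[C]_1 => N 0 0) hy; rewrite !mxE => h0.
  move: h0; rewrite (eq_bigr (fun j => y 0 j * (y 0 j)^*)); last by move=> j _; rewrite !mxE.
  move=> h0.
  have hn : forall j : 'I_k, true -> 0 <= y 0 j * (y 0 j)^*.
    by move=> j _; rewrite -normCK exprn_ge0.
  have := psumr_eq0P hn h0 (i:=b) isT; rewrite -normCK => /eqP.
  by rewrite expf_eq0 /= normr_eq0 => /eqP; rewrite /y mxE.
have := mxrankS sub; rewrite !mxrank_ker mxrank_tr.
have := rank_leq_col M; have := rank_leq_row M.
have := rank_leq_col (M^T *m map_mx Num.conj M).
lia.
Qed.
Variable D : nat.
Lemma delta_entry (A B : 'M[C]_D) i j p q :
  (A *m delta_mx i j *m B) p q = A p i * B j q.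
Proof.
rewrite mxE (bigD1 j) //= big1 ?addr0; last first.
  move=> b hb; rewrite mxE big1 ?mul0r // => a _; rewrite mxE.
  by rewrite (negbTE hb) andbF mulr0.
rewrite mxE (bigD1 i) //= big1 ?addr0; last first.
  by move=> a ha; rewrite mxE (negbTE ha) mulr0.
by rewrite mxE !eqxx mulr1.
Qed.

Definition kmap (I : finType) (F : I -> 'M[C]_D) (X : 'M[C]_D) : 'M[C]_D :=
  \sum_(i : I) (F i *m X *m adjmx (F i)).

Definition WM (I : finType) (F : I -> 'M[C]_D) : 'M[C]_(#|I|, D * D) :=
  \matrix_(l, x) F (enum_val l) (mxtens_unindex x).1 (mxtens_unindex x).2.

Lemma choi_entry (T : 'M[C]_D -> 'M[C]_D) p i q j :
  choi T (mxtens_index (p, i)) (mxtens_index (q, j)) = T (delta_mx i j) p q.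
Proof.
rewrite /choi (summxE (V:=C)).
under eq_bigr => a _ do rewrite (summxE (V:=C)).
under eq_bigr => a _ do under eq_bigr => b _ do rewrite tensmxE mxE.
have inner : forall a : 'I_D, \sum_(b < D) T (delta_mx a b) p q * ((i == a) && (j == b))%:R
    = T (delta_mx a j) p q * (i == a)%:R.
  move=> a; rewrite (bigD1 j) //= big1 ?addr0 ?eqxx ?andbT // => b hb.
  by rewrite [j == b]eq_sym (negbTE hb) andbF mulr0.
under eq_bigr => a _ do rewrite inner.
rewrite (bigD1 i) //= big1 ?addr0 ?eqxx ?mulr1 // => a ha.
by rewrite eq_sym (negbTE ha) mulr0.
Qed.

Lemma choi_kmap (I : finType) (F : I -> 'M[C]_D) :
  choi (kmap F) = (WM F)^T *m map_mx Num.conj (WM F).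
Proof.
apply/matrixP => x y.
case: (mxtens_indexP x) => p i; case: (mxtens_indexP y) => q j.
rewrite choi_entry mxE.
rewrite (eq_bigr (fun l => F (enum_val l) p i * (F (enum_val l) q j)^*)); last first.
  by move=> l _; rewrite !mxE !mxtens_indexK.
rewrite -(big_enum_val (A := I) (fun f => F f p i * (F f q j)^*)).
rewrite /kmap (summxE (V:=C)).
by apply: eq_bigr => f _; rewrite delta_entry /adjmx !mxE.
Qed.

Lemma rank_choi_kmap (I : finType) (F : I -> 'M[C]_D) :
  \rank (choi (kmap F)) = \rank (WM F).
Proof. by rewrite choi_kmap rank_gram. Qed.

Lemma adjmxM (A B : 'M[C]_D) : adjmx (A *m B) = adjmx B *m adjmx A.
Proof. by rewrite /adjmx trmx_mul map_mxM. Qed.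

Lemma kmap_comp (I J : finType) (F : I -> 'M[C]_D) (G : J -> 'M[C]_D) X :
  kmap F (kmap G X) = kmap (fun pr : I * J => F pr.1 *m G pr.2) X.
Proof.
rewrite /kmap -(pair_bigA _ (fun i j => F i *m G j *m X *m adjmx (F i *m G j))) /=; apply: eq_bigr => i _.
rewrite mulmx_sumr mulmx_suml; apply: eq_bigr => j _.
by rewrite adjmxM !mulmxA.
Qed.

Lemma choi_ext (T1 T2 : 'M[C]_D -> 'M[C]_D) : T1 =1 T2 -> choi T1 = choi T2.
Proof.
move=> h; rewrite /choi; apply: eq_bigr => i _; apply: eq_bigr => j _.
by rewrite h.
Qed.

Lemma iter_kraus (k : nat) (A : 'I_k -> 'M[C]_D) (n : nat) :
  exists (I : finType) (G : I -> 'M[C]_D),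
    (forall X, iter n (kraus_map A) X = kmap G X) /\
    (forall s : seq 'I_k, size s = n ->
       exists i, G i = foldr (fun a M => A a *m M) 1%:M s).
Proof.
elim: n => [|n [I [G [h1 h2]]]].
  exists ('I_1 : finType), (fun _ => 1%:M); split.
    by move=> X; rewrite /kmap big_ord1 /adjmx trmx1 map_mx1 mul1mx mulmx1.
  by case=> // _; exists ord0.
exists ('I_k * I)%type, (fun pr => A pr.1 *m G pr.2); split.
  by move=> X; rewrite iterS h1 -kmap_comp.
case=> // a s [] /h2 [i hi]; exists (a, i) => /=.
by rewrite hi.
Qed.
End Gen.

Section Main.
Variable C : numClosedFieldType.
Variable m : nat.
Local Notation D := m.+2.

Definition Pm : 'M[C]_D := \matrix_(x, y) ((x == y + 1)%:R).

Lemma Pm_delta (i j : 'I_D) : Pm *m delta_mx i j = delta_mx (i + 1) j.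
Proof.
apply/matrixP => x y; rewrite mxE (bigD1 i) //= big1 ?addr0.
  by rewrite !mxE !eqxx andTb -natrM mulnb.
by move=> z hz; rewrite !mxE (negbTE hz) mulr0.
Qed.

Lemma delta_Pm (i j : 'I_D) : delta_mx i j *m Pm = delta_mx i (j - 1).
Proof.
apply/matrixP => x y; rewrite mxE (bigD1 j) //= big1 ?addr0.
  rewrite !mxE !eqxx andbT -natrM mulnb.
  by rewrite [y == _]eq_sym subr_eq.
by move=> z hz; rewrite !mxE (negbTE hz) andbF mul0r.
Qed.

Lemma iter_Pm_delta a (i j : 'I_D) :
  iter a (mulmx Pm) (delta_mx i j) = delta_mx (i + a%:R) j.
Proof.
elim: a i => [|a IH] i; first by rewrite addr0.
by rewrite iterSr /= Pm_delta IH -addrA -natr1 [1 + _]addrC.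
Qed.

Lemma delta_iter_Pm c (i j : 'I_D) (M : 'M[C]_D) :
  delta_mx i j *m iter c (mulmx Pm) M = delta_mx i (j - c%:R) *m M.
Proof.
elim: c j => [|c IH] j; first by rewrite subr0.
by rewrite iterS mulmxA delta_Pm IH -addrA -opprD -natr1 [1 + _]addrC.
Qed.

Lemma iter_E00 t (x : 'I_D) :
  iter t (mulmx (delta_mx 0 0)) (delta_mx 0 x) = delta_mx 0 x :> 'M[C]_D.
Proof. by elim: t => // t IH; rewrite iterS IH mul_delta_mx. Qed.

Lemma foldr_nseq (k : nat) (A : 'I_k -> 'M[C]_D) n x (M : 'M[C]_D) :
  foldr (fun a M => A a *m M) M (nseq n x) = iter n (mulmx (A x)) M.
Proof. by elim: n => //= n ->. Qed.

End Main.

Section Fam.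
Variable C : numClosedFieldType.
Variable m s : nat.
Local Notation D := m.+2.
Hypothesis hs : (s <= D * D - 2)%N.

Definition Sx : {set 'I_D * 'I_D} := ~: [set (0, 0); (1, 0)].
Definition pos (j : nat) : 'I_D * 'I_D := nth (0, 0) (enum Sx) j.

Lemma card_Sx : #|Sx| = (D * D - 2)%N.
Proof.
have := cardsC [set ((0 : 'I_D), (0 : 'I_D)); (1, 0)].
rewrite cards2 card_prod card_ord.
have -> : ((0 : 'I_D), (0 : 'I_D)) != (1, 0).
  by rewrite xpair_eqE negb_and eq_sym oner_eq0.
by rewrite /Sx => <- /=; rewrite addKn.
Qed.

Lemma pos_in (j : 'I_s) : pos j \in Sx.
Proof.
rewrite /pos -mem_enum mem_nth // -cardE card_Sx.
exact: leq_trans (ltn_ord j) hs.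
Qed.

Lemma pos_inj (i j : 'I_s) : (pos i == pos j) = (i == j).
Proof.
have hi : (i < size (enum Sx))%N by rewrite -cardE card_Sx (leq_trans (ltn_ord i) hs).
have hj : (j < size (enum Sx))%N by rewrite -cardE card_Sx (leq_trans (ltn_ord j) hs).
by rewrite /pos nth_uniq ?enum_uniq.
Qed.

Definition Af (i : 'I_s.+2) : 'M[C]_D :=
  if val i == 0%N then Pm C m
  else if val i == 1%N then delta_mx 0 0
  else delta_mx (pos (val i - 2)).1 (pos (val i - 2)).2.

Lemma Af0 : Af ord0 = Pm C m. Proof. by []. Qed.
Lemma Af1 : Af (lift ord0 ord0) = delta_mx 0 0. Proof. by []. Qed.
Lemma Af2 (j : 'I_s) : Af (lift ord0 (lift ord0 j)) = delta_mx (pos j).1 (pos j).2.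
Proof. by rewrite /Af /= /bump !leq0n !add1n subn2. Qed.

Lemma indep (v : 'I_s.+2 -> C) :
  (forall a b, \sum_i v i * Af i a b = 0) -> forall i, v i = 0.
Proof.
move=> h.
have hsum : forall a b, \sum_i v i * Af i a b =
   v ord0 * Pm C m a b + v (lift ord0 ord0) * (delta_mx 0 0 : 'M[C]_D) a b +
   \sum_(j < s) v (lift ord0 (lift ord0 j)) * ((pos j == (a, b))%:R).
  move=> a b; rewrite big_ord_recl big_ord_recl Af0 Af1 addrA; congr (_ + _).
  apply: eq_bigr => j _; rewrite Af2 mxE; case: (pos j) => x y /=.
  by rewrite xpair_eqE [x == a]eq_sym [y == b]eq_sym.
have out : forall (p : 'I_D * 'I_D), p \notin Sx ->
    \sum_(j < s) v (lift ord0 (lift ord0 j)) * ((pos j == p)%:R) = 0.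
  move=> p hp; rewrite big1 // => j _.
  case: eqP => [he|]; last by rewrite mulr0.
  by move: (pos_in j); rewrite he (negbTE hp).
have h0 : v ord0 = 0.
  have := h 1 0; rewrite hsum out; last by rewrite !inE eqxx orbT.
  rewrite !mxE add0r eqxx mulr1 oner_eq0 /= mulr0 addr0.
  by rewrite addr0.
have h1 : v (lift ord0 ord0) = 0.
  have := h 0 0; rewrite hsum out; last by rewrite !inE eqxx.
  rewrite !mxE h0 mul0r add0r eqxx mulr1 addr0.
  done.
have h2 : forall j, v (lift ord0 (lift ord0 j)) = 0.
  move=> j; have := h (pos j).1 (pos j).2; rewrite hsum h0 h1 !mul0r !add0r.
  rewrite (bigD1 j) //= big1 ?addr0.
    by rewrite -surjective_pairing eqxx mulr1.
  by move=> l hl; rewrite -surjective_pairing pos_inj (negbTE hl) mulr0.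
case=> [[|[|j]] hj].
- by rewrite (_ : Ordinal hj = ord0) //; apply: val_inj.
- by rewrite (_ : Ordinal hj = lift ord0 ord0) //; apply: val_inj.
- have hj' : (j < s)%N by [].
  by rewrite (_ : Ordinal hj = lift ord0 (lift ord0 (Ordinal hj'))) //; apply: val_inj; rewrite /= /bump !leq0n.
Qed.

End Fam.

Section Fin.
Variable C : numClosedFieldType.
Variable m s : nat.
Local Notation D := m.+2.
Hypothesis hs : (s <= D * D - 2)%N.

Lemma rank_Af : \rank (WM (@Af C m s)) = s.+2.
Proof.
have : row_free (WM (@Af C m s)).
  rewrite -kermx_eq0 -submx0; apply/row_subP => l.
  set u := row l _.
  have hu : u *m WM (@Af C m s) = 0 by apply/sub_kermxP; rewrite row_sub.
  have key := @indep C m s hs (fun i => u 0 (enum_rank i)).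
  rewrite submx0; apply/eqP/matrixP => x y; rewrite [x]ord1 [RHS]mxE.
  rewrite -[y]enum_valK key //.
  move=> a b.
  have := congr1 (fun N : 'rV[C]_(D * D) => N 0 (mxtens_index (a, b))) hu.
  rewrite [RHS]mxE mxE.
  rewrite (eq_bigr (fun l => u 0 l * @Af C m s (enum_val l) a b)); last first.
    by move=> l0 _; rewrite !mxE mxtens_indexK.
  move=> hs0; rewrite -[X in _ = X]hs0.
  rewrite [RHS](eq_bigr (fun l0 : 'I_#|'I_s.+2| =>
     (fun i => u 0 (enum_rank i) * @Af C m s i a b) (enum_val l0))); last first.
    by move=> l0 _; rewrite enum_valK.
  rewrite -(big_enum_val (A := 'I_s.+2) (fun i => u 0 (enum_rank i) * @Af C m s i a b)).
  by apply: eq_bigr.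
by move/eqP => ->; rewrite card_ord.
Qed.

Lemma prim_Af : primitive (kraus_map (@Af C m s)).
Proof.
have [I [G [h1 h2]]] := iter_kraus (@Af C m s) (2 * D).
exists (2 * D)%N.
rewrite (choi_ext h1) rank_choi_kmap.
apply/eqP; rewrite eqn_leq -mulnn rank_leq_col /=.
rewrite -{1}(mxrank1 C (D * D)); apply: mxrankS; apply/row_subP => k.
rewrite row1.
case: (mxtens_indexP k) => a0 b0.
set a := nat_of_ord a0; set c := nat_of_ord (- b0).
have ha : (a < D)%N := ltn_ord a0.
have hc : (c < D)%N := ltn_ord (- b0).
set t := (2 * D - a - c - 1)%N.
set e1 : 'I_s.+2 := lift ord0 ord0.
have hsz : size (nseq a ord0 ++ nseq t.+1 e1 ++ nseq c ord0) = (2 * D)%N.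
  rewrite !size_cat !size_nseq /t; lia.
have [i hi] := h2 _ hsz.
rewrite !foldr_cat !foldr_nseq Af0 in hi.
have he1 : @Af C m s e1 = delta_mx 0 0 by [].
rewrite he1 in hi.
rewrite iterSr delta_iter_Pm mulmx1 sub0r iter_E00 iter_Pm_delta add0r in hi.
rewrite /a /c !natr_Zp opprK in hi.
apply: (eq_row_sub (enum_rank i)).
apply/matrixP => x y; rewrite !mxE enum_rankK hi.
rewrite !mxE [x]ord1 eqxx /=.
case: (mxtens_indexP y) => p q.
move: (mxtens_indexK (p, q)); rewrite /mxtens_unindex => -[-> ->].
by rewrite (inj_eq (can_inj (@mxtens_indexK _ _))) xpair_eqE.
Qed.

End Fin.

Unset Implicit Arguments.

Theorem lemma3 (C : numClosedFieldType) (D r : nat) :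
  (2 <= D)%N -> (2 <= r <= D ^ 2)%N ->
  exists (k : nat) (A : 'I_k -> 'M[C]_D),
    kraus_rank (kraus_map A) = r /\ primitive (kraus_map A).
Proof.
move=> hD /andP [hr1 hr2].
case: D hD hr2 => [|[|m]] // _ hr2.
case: r hr1 hr2 => [|[|s]] // _ hr2.
have hs : (s <= m.+2 * m.+2 - 2)%N by rewrite mulnn; lia.
exists s.+2, (@Af C m s); split.
- have := @rank_choi_kmap C m.+2 _ (@Af C m s).
  by rewrite (@rank_Af C m s hs) => h; exact: h.
- exact: (@prim_Af C m s).
Qed.
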